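(* Let $0\le\lambda<\gamma\le\delta$. Let $\mathfrak{f}\in\mathcal{R}_H^0(\gamma,\delta,\lambda)$ and let $\varphi\in\mathcal{A}$ be such that $\mathrm{Re}\left(\frac{\varphi(z)}{z}\right)>\frac12$ for all $z\in\mathcal{U}$. Then $\mathfrak{f}\,\widetilde{\ast}\,\varphi\in\mathcal{R}_H^0(\gamma,\delta,\lambda)$.
   Context: Let $\mathcal{U}=\{z\in\mathbb{C}:|z|<1\}$ and let $\mathcal{A}$ be the class of analytic functions $F$ in $\mathcal{U}$ with $F(0)=0$, $F'(0)=1$. $\mathcal{H}^0$ denotes the class of complex-valued harmonic functions $\mathfrak{f}=\mathfrak{s}+\overline{\mathfrak{t}}$ on $\mathcal{U}$, where $\mathfrak{s}(z)=z+\sum_{m\ge2}a_mz^m$ and $\mathfrak{t}(z)=\sum_{m\ge2}b_mz^m$ are analytic in $\mathcal{U}$. For real $0\le\lambda<\gamma\le\delta$, $\mathcal{R}_H^0(\gamma,\delta,\lambda)$ is the class of $\mathfrak{f}=\mathfrak{s}+\overline{\mathfrak{t}}\in\mathcal{H}^0$ such that for all $z\in\mathcal{U}$, $\mathrm{Re}\left[\gamma\mathfrak{s}'(z)+\delta z\mathfrak{s}''(z)+\frac{\delta-\gamma}{2}z^2\mathfrak{s}'''(z)-\lambda\right]>\left|\gamma\mathfrak{t}'(z)+\delta z\mathfrak{t}''(z)+\frac{\delta-\gamma}{2}z^2\mathfrak{t}'''(z)\right|$. For analytic $g(z)=\sum c_mz^m$, $h(z)=\sum d_mz^m$, $(g\ast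 h)(z)=\sum c_md_mz^m$. For harmonic $\mathfrak{f}=\mathfrak{s}+\overline{\mathfrak{t}}$ and analytic $\varphi$, $\mathfrak{f}\,\widetilde{\ast}\,\varphi=\mathfrak{s}\ast\varphi+\overline{\mathfrak{t}\ast\varphi}$. Here $\varphi(z)/z$ at $z=0$ means its limiting value $1$. *)

(* Defs.v *)
From Stdlib Require Import Reals.
From Coquelicot Require Import Coquelicot.
Open Scope R_scope.

(* An analytic function F(z) = sum_m c m z^m on the unit disk U is represented
   by its Taylor coefficient sequence c : nat -> C; analyticity in U means the
   power series converges at every z with |z| < 1. *)

(* complex-valued series sum (componentwise; equals the sum when convergent) *)
Definition CSeries (u : nat -> C) : C :=
  (Series (fun n => Re (u n)), Series (fun n => Im (u n))).

Definition analytic_in_U (c : nat -> C) : Prop :=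
  forall z : C, Cmod z < 1 -> ex_series (fun m => (c m * pow_n z m)%C).

Fixpoint ff (m k : nat) : nat :=
  match k with
  | O => 1%nat
  | S k' => (ff m k' * (m - k'))%nat
  end.

(* the k-th derivative of the power series with coefficients c, evaluated at z,
   obtained by term-wise differentiation: sum_m c_m (d/dz)^k z^m *)
Definition PSder (k : nat) (c : nat -> C) (z : C) : C :=
  CSeries (fun m => (RtoC (INR (ff m k)) * c m * pow_n z (m - k))%C).

Definition PSval (c : nat -> C) (z : C) : C := PSder 0 c z.

Definition in_A (c : nat -> C) : Prop :=
  analytic_in_U c /\ c 0%nat = RtoC 0 /\ c 1%nat = RtoC 1.

(* class H^0: f = s + conj t, s(z) = z + sum_{m>=2} a_m z^m,
   t(z) = sum_{m>=2} b_m z^m, both analytic in U.  The harmonic function is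
   represented by the pair (a, b) of coefficient sequences of (s, t). *)
Definition in_H0 (a b : nat -> C) : Prop :=
  analytic_in_U a /\ analytic_in_U b /\
  a 0%nat = RtoC 0 /\ a 1%nat = RtoC 1 /\
  b 0%nat = RtoC 0 /\ b 1%nat = RtoC 0.

Definition Lop (gamma delta : R) (c : nat -> C) (z : C) : C :=
  (RtoC gamma * PSder 1 c z + RtoC delta * z * PSder 2 c z
  + RtoC ((delta - gamma) / 2) * (z * z) * PSder 3 c z)%C.

Definition RH0 (gamma delta lambda : R) (a b : nat -> C) : Prop :=
  in_H0 a b /\
  forall z : C, Cmod z < 1 ->
    Re (Lop gamma delta a z - RtoC lambda)%C > Cmod (Lop gamma delta b z).

Definition hadamard (c d : nat -> C) : nat -> C := fun m => (c m * d m)%C.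

(* f ~* phi = s * phi + conj (t * phi): represented by the pair *)
Definition harm_conv (a b phi : nat -> C) : (nat -> C) * (nat -> C) :=
  (hadamard a phi, hadamard b phi).

(* phi(z)/z, with value 1 (its limit) at z = 0 *)
Definition phi_over_z (phi : nat -> C) (z : C) : C :=
  if Req_EM_T (Cmod z) 0 then RtoC 1 else (PSval phi z / z)%C.

(* Main.v *)
Require Import Defs.
From Stdlib Require Import Reals Lra Lia.
From Coquelicot Require Import Coquelicot.
Open Scope R_scope.

Lemma Cext : forall x y : C, Re x = Re y -> Im x = Im y -> x = y.
Proof. intros [a b] [c d]; simpl; intros -> ->; reflexivity. Qed.

Lemma pow_n_S (z : C) n : pow_n z (S n) = (z * pow_n z n)%C.
Proof. reflexivity. Qed.
Lemma pow_n_O (z : C) : pow_n z 0 = RtoC 1.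
Proof. reflexivity. Qed.

Lemma Cmod_pow_n (z : C) n : Cmod (pow_n z n) = Cmod z ^ n.
Proof.
  induction n; simpl. apply Cmod_1.
  change (Cmod (z * pow_n z n)%C = Cmod z * Cmod z ^ n).
  rewrite Cmod_mult, IHn; auto.
Qed.

Definition absU (c : nat -> C) : Prop :=
  forall t, 0 < t < 1 -> ex_series (fun m => Cmod (c m) * t ^ m).

Lemma Rabs_nonneg_eq x : 0 <= x -> Rabs x = x.
Proof. intros; apply Rabs_pos_eq; auto. Qed.

Lemma exR_le (a b : nat -> R) : (forall n, Rabs (a n) <= b n) -> ex_series b -> ex_series a.
Proof. intros H Hb. apply (@ex_series_le R_AbsRing R_CompleteNormedModule a b); auto. Qed.

Lemma absU_at c z : absU c -> Cmod z < 1 ->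
  ex_series (fun m => Cmod (c m * pow_n z m)).
Proof.
  intros Hc Hz.
  assert (H0 := Cmod_ge_0 z).
  apply (exR_le _ (fun m => Cmod (c m) * ((1 + Cmod z)/2) ^ m)).
  2: apply Hc; lra.
  intros n.
  rewrite Rabs_nonneg_eq by apply Cmod_ge_0.
  rewrite Cmod_mult, Cmod_pow_n.
  apply Rmult_le_compat_l. apply Cmod_ge_0.
  apply pow_incr; lra.
Qed.

Lemma exC_of_abs (u : nat -> C) : ex_series (fun n => Cmod (u n)) ->
  @ex_series C_AbsRing C_NormedModule u.
Proof.
  intros H. apply (ex_series_le u (fun n => Cmod (u n))); auto.
  intros n; apply Rle_refl.
Qed.

Lemma absU_analytic c : absU c -> analytic_in_U c.
Proof.
  intros Hc z Hz. apply exC_of_abs. apply absU_at; auto.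
Qed.

Lemma analytic_absU c : analytic_in_U c -> absU c.
Proof.
  intros Hc t Ht.
  set (t' := (1 + t) / 2).
  assert (Ht' : 0 < t' < 1) by (unfold t'; lra).
  assert (Hz : Cmod (RtoC t') < 1) by (rewrite Cmod_R, Rabs_pos_eq; lra).
  destruct (Cauchy_ex_series _ (Hc _ Hz) (mkposreal 1 Rlt_0_1)) as [N HN].
  apply (proj2 (ex_series_incr_n _ N)).
  set (q := t / t').
  assert (Hq : 0 < q < 1).
  { unfold q; split. apply Rdiv_lt_0_compat; lra.
    apply (Rmult_lt_reg_r t'); [lra|]. unfold Rdiv. rewrite Rmult_assoc, Rinv_l by lra. unfold t'; lra. }
  apply (exR_le _ (fun k => q ^ (N + k))).
  - intros k.
    assert (Hb := HN (N + k)%nat (N + k)%nat ltac:(lia) ltac:(lia)).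
    rewrite sum_n_n in Hb. simpl in Hb.
    change (Cmod (c (N + k)%nat * pow_n (RtoC t') (N + k))%C < 1) in Hb.
    rewrite Cmod_mult, Cmod_pow_n, Cmod_R, Rabs_pos_eq in Hb by lra.
    rewrite Rabs_pos_eq.
    2: apply Rmult_le_pos; [apply Cmod_ge_0| apply pow_le; lra].
    replace t with (q * t') by (unfold q; field; lra).
    rewrite Rpow_mult_distr.
    rewrite (Rmult_comm (q ^ _)), <- Rmult_assoc.
    rewrite <- (Rmult_1_l (q ^ (N + k))) at 2.
    apply Rmult_le_compat_r. apply pow_le; lra. lra.
  - apply (ex_series_ext (fun k => q ^ N * q ^ k)).
    intros k; rewrite pow_add; auto.
    apply (ex_series_scal_l (q ^ N) (fun k => q ^ k)).
    apply ex_series_geom. rewrite Rabs_pos_eq; lra.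
Qed.

Lemma exR_scal (k : R) (a : nat -> R) : ex_series a -> ex_series (fun n => k * a n).
Proof. intros H. apply (ex_series_scal_l k a H). Qed.

Lemma exR_plus (a b : nat -> R) : ex_series a -> ex_series b -> ex_series (fun n => a n + b n).
Proof. intros H1 H2. apply (ex_series_plus a b H1 H2). Qed.

Lemma exR_ext (a b : nat -> R) : (forall n, a n = b n) -> ex_series a -> ex_series b.
Proof. intros H Ha. apply (ex_series_ext a b H Ha). Qed.

Lemma Series_nonneg (a : nat -> R) : (forall n, 0 <= a n) -> ex_series a -> 0 <= Series a.
Proof.
  intros H Ha.
  replace 0 with (Series (fun n => 0 * a n)).
  2: rewrite Series_scal_l; ring.
  apply Series_le; auto. intros n; rewrite Rmult_0_l; split; [lra| auto].
Qed.

Lemma sum_le_Series (a : nat -> R) n : (forall n, 0 <= a n) -> ex_series a ->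
  sum_f_R0 a n <= Series a.
Proof.
  intros H Ha. rewrite (Series_incr_n a (S n)) by (auto; lia). simpl pred.
  assert (0 <= Series (fun k => a (S n + k)%nat)).
  { apply Series_nonneg. auto. apply (proj1 (ex_series_incr_n a (S n))); auto. }
  lra.
Qed.

Lemma term_le_Series (a : nat -> R) n : (forall n, 0 <= a n) -> ex_series a ->
  a n <= Series a.
Proof.
  intros H Ha. eapply Rle_trans; [|apply (sum_le_Series a n H Ha)].
  destruct n; simpl. lra. assert (0 <= sum_f_R0 a n) by (apply cond_pos_sum; auto). lra.
Qed.

Lemma absU_le c d : (forall n, Cmod (d n) <= Cmod (c n)) -> absU c -> absU d.
Proof.
  intros H Hc t Ht.
  apply (exR_le _ (fun m => Cmod (c m) * t ^ m)); [| apply Hc; auto].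
  intros n. rewrite Rabs_pos_eq.
  apply Rmult_le_compat_r; [apply pow_le; lra| apply H].
  apply Rmult_le_pos; [apply Cmod_ge_0| apply pow_le; lra].
Qed.

Lemma absU_ext c d : (forall n, c n = d n) -> absU c -> absU d.
Proof. intros H Hc; apply (absU_le c d); [intros n; rewrite H; apply Rle_refl| auto]. Qed.

Lemma absU_scal c (k : C) : absU c -> absU (fun n => (k * c n)%C).
Proof.
  intros Hc t Ht.
  apply (exR_ext (fun m => Cmod k * (Cmod (c m) * t ^ m))).
  intros n; rewrite Cmod_mult; ring.
  apply exR_scal, Hc; auto.
Qed.

Lemma absU_plus c d : absU c -> absU d -> absU (fun n => (c n + d n)%C).
Proof.
  intros Hc Hd t Ht.
  apply (exR_le _ (fun m => Cmod (c m) * t ^ m + Cmod (d m) * t ^ m)).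
  2: apply exR_plus; [apply Hc| apply Hd]; auto.
  intros n. rewrite Rabs_pos_eq.
  2: apply Rmult_le_pos; [apply Cmod_ge_0| apply pow_le; lra].
  rewrite <- Rmult_plus_distr_r. apply Rmult_le_compat_r. apply pow_le; lra.
  apply Cmod_triangle.
Qed.

Lemma absU_S c : absU c -> absU (fun n => c (S n)).
Proof.
  intros Hc t Ht.
  assert (H1 := proj1 (ex_series_incr_1 _) (Hc t Ht)). simpl in H1.
  apply (exR_ext (fun k => / t * (Cmod (c (S k)) * (t * t ^ k)))).
  intros n; field; lra.
  apply exR_scal; auto.
Qed.

Lemma absU_shift c k : absU c -> absU (fun n => c (n + k)%nat).
Proof.
  revert c; induction k; intros c Hc.
  - apply (absU_ext c); auto. intros n; rewrite Nat.add_0_r; auto.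
  - apply (absU_ext (fun n => c (S n + k)%nat)).
    intros n; f_equal; lia.
    apply (IHk (fun m => c (S m))). apply absU_S; auto.
Qed.

Lemma absU_n c : absU c -> absU (fun n => (RtoC (INR n) * c n)%C).
Proof.
  intros Hc t Ht.
  set (t' := (1 + t) / 2).
  assert (Ht' : 0 < t' < 1) by (unfold t'; lra).
  set (h := t' / t - 1).
  assert (Hh : 0 < h).
  { unfold h. apply Rlt_Rminus. apply (Rmult_lt_reg_r t); [lra|].
    unfold Rdiv; rewrite Rmult_assoc, Rinv_l by lra. unfold t'; lra. }
  apply (exR_le _ (fun m => / h * (Cmod (c m) * t' ^ m))).
  2: apply exR_scal, Hc; auto.
  intros n. rewrite Cmod_mult, Cmod_R, (Rabs_pos_eq (INR n)) by apply pos_INR.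
  rewrite Rabs_pos_eq.
  2: apply Rmult_le_pos; [apply Rmult_le_pos; [apply pos_INR| apply Cmod_ge_0]| apply pow_le; lra].
  set (q := t / t').
  assert (Hq: 0 < q) by (unfold q; apply Rdiv_lt_0_compat; lra).
  assert (E1 : t = q * t') by (unfold q; field; lra).
  assert (E2 : q * (1 + h) = 1) by (unfold q, h; field; lra).
  assert (B := Rle_pow_lin h n ltac:(lra)).
  assert (B2 : INR n * q ^ n <= / h).
  { apply (Rmult_le_reg_r h); auto. rewrite Rinv_l by lra.
    assert (0 < q ^ n) by (apply pow_lt; auto).
    assert (q ^ n * (1 + INR n * h) <= q ^ n * (1 + h) ^ n) by (apply Rmult_le_compat_l; lra).
    rewrite <- Rpow_mult_distr, E2, pow1 in H0. nra. }
  rewrite E1, Rpow_mult_distr.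
  assert (0 <= Cmod (c n) * t' ^ n) by (apply Rmult_le_pos; [apply Cmod_ge_0| apply pow_le; lra]).
  replace (INR n * Cmod (c n) * (q ^ n * t' ^ n)) with ((INR n * q ^ n) * (Cmod (c n) * t' ^ n)) by ring.
  apply Rmult_le_compat_r; auto.
Qed.

Lemma absU_npow c k : absU c -> absU (fun n => (RtoC (INR n ^ k) * c n)%C).
Proof.
  intros Hc; induction k.
  - apply (absU_ext c); auto. intros n; simpl. apply Cext; simpl; unfold Re, Im; simpl; ring.
  - apply (absU_ext (fun n => (RtoC (INR n) * (RtoC (INR n ^ k) * c n))%C)).
    intros n; simpl. apply Cext; simpl; unfold Re, Im; simpl; ring.
    apply (absU_n (fun n => (RtoC (INR n ^ k) * c n)%C)); auto.
Qed.

Lemma ff_le n k : (ff n k <= n ^ k)%nat.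
Proof.
  induction k; simpl. lia.
  rewrite (Nat.mul_comm n). apply Nat.mul_le_mono; [auto| lia].
Qed.

Lemma absU_ff c k : absU c -> absU (fun n => (RtoC (INR (ff n k)) * c n)%C).
Proof.
  intros Hc. apply (absU_le (fun n => (RtoC (INR n ^ k) * c n)%C)).
  2: apply absU_npow; auto.
  intros n. rewrite !Cmod_mult, !Cmod_R.
  apply Rmult_le_compat_r. apply Cmod_ge_0.
  rewrite !Rabs_pos_eq. rewrite <- pow_INR. apply le_INR, ff_le.
  apply pow_le, pos_INR. apply pos_INR.
Qed.

Lemma absU_mult a b : absU a -> absU b -> absU (fun n => (a n * b n)%C).
Proof.
  intros Ha Hb t Ht.
  set (r := sqrt t).
  assert (Hr : 0 < r < 1).
  { unfold r; split. apply sqrt_lt_R0; lra. rewrite <- sqrt_1. apply sqrt_lt_1; lra. }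
  assert (Er : t = r * r) by (unfold r; rewrite sqrt_sqrt; lra).
  set (Sa := Series (fun m => Cmod (a m) * r ^ m)).
  apply (exR_le _ (fun m => Sa * (Cmod (b m) * r ^ m))).
  2: apply exR_scal, Hb; auto.
  intros n. rewrite Rabs_pos_eq.
  2: apply Rmult_le_pos; [apply Cmod_ge_0| apply pow_le; lra].
  rewrite Cmod_mult, Er, Rpow_mult_distr.
  replace (Cmod (a n) * Cmod (b n) * (r ^ n * r ^ n)) with ((Cmod (a n) * r ^ n) * (Cmod (b n) * r ^ n)) by ring.
  apply Rmult_le_compat_r. apply Rmult_le_pos; [apply Cmod_ge_0| apply pow_le; lra].
  apply (term_le_Series (fun m => Cmod (a m) * r ^ m)).
  intros m; apply Rmult_le_pos; [apply Cmod_ge_0| apply pow_le; lra].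
  apply Ha; auto.
Qed.

Lemma Re_le_Cmod c : Rabs (Re c) <= Cmod c.
Proof. eapply Rle_trans; [apply Rmax_l| apply Rmax_Cmod]. Qed.
Lemma Im_le_Cmod c : Rabs (Im c) <= Cmod c.
Proof. eapply Rle_trans; [apply Rmax_r| apply Rmax_Cmod]. Qed.

Definition absC (u : nat -> C) := ex_series (fun n => Cmod (u n)).

Lemma exRe u : absC u -> ex_series (fun n => Re (u n)).
Proof. intros H. apply (exR_le _ _ (fun n => Re_le_Cmod (u n)) H). Qed.
Lemma exIm u : absC u -> ex_series (fun n => Im (u n)).
Proof. intros H. apply (exR_le _ _ (fun n => Im_le_Cmod (u n)) H). Qed.

Lemma Re_CSeries u : Re (CSeries u) = Series (fun n => Re (u n)).
Proof. reflexivity. Qed.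
Lemma Im_CSeries u : Im (CSeries u) = Series (fun n => Im (u n)).
Proof. reflexivity. Qed.

Lemma CSeries_ext u v : (forall n, u n = v n) -> CSeries u = CSeries v.
Proof.
  intros H. apply Cext; rewrite ?Re_CSeries, ?Im_CSeries; apply Series_ext; intros n; rewrite H; auto.
Qed.

Lemma CSeries_plus u v : absC u -> absC v ->
  CSeries (fun n => (u n + v n)%C) = (CSeries u + CSeries v)%C.
Proof.
  intros Hu Hv. apply Cext.
  - rewrite Re_CSeries. simpl. rewrite <- Series_plus by (apply exRe; auto). reflexivity.
  - rewrite Im_CSeries. simpl. rewrite <- Series_plus by (apply exIm; auto). reflexivity.
Qed.

Lemma CSeries_scal (k : C) u : absC u ->
  CSeries (fun n => (k * u n)%C) = (k * CSeries u)%C.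
Proof.
  intros Hu. apply Cext.
  - rewrite Re_CSeries. simpl. unfold Re, Im.
    rewrite <- !Series_scal_l. rewrite <- Series_minus.
    reflexivity. apply exR_scal, exRe; auto. apply exR_scal, exIm; auto.
  - rewrite Im_CSeries. simpl. unfold Re, Im.
    rewrite <- !Series_scal_l. rewrite <- Series_plus.
    reflexivity. apply exR_scal, exIm; auto. apply exR_scal, exRe; auto.
Qed.

Lemma CSeries_shift u k : (forall i, (i < k)%nat -> u i = RtoC 0) ->
  CSeries u = CSeries (fun n => u (k + n)%nat).
Proof.
  intros H. apply Cext; rewrite ?Re_CSeries, ?Im_CSeries.
  apply (Series_incr_n_aux (fun n => Re (u n))); intros i Hi; rewrite H; auto.
  apply (Series_incr_n_aux (fun n => Im (u n))); intros i Hi; rewrite H; auto.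
Qed.

Lemma Series_first (a : nat -> R) : (forall n, (0 < n)%nat -> a n = 0) -> Series a = a 0%nat.
Proof.
  intros H. unfold Series.
  rewrite (Lim_seq_ext _ (fun _ => a 0%nat)). rewrite Lim_seq_const; reflexivity.
  induction n. apply sum_O. rewrite sum_Sn, IHn, (H (S n)) by lia. apply Rplus_0_r.
Qed.

Lemma CSeries_at0 (c : nat -> C) : CSeries (fun n => (c n * pow_n (RtoC 0) n)%C) = c 0%nat.
Proof.
  apply Cext; rewrite ?Re_CSeries, ?Im_CSeries; rewrite Series_first.
  - simpl. unfold Re, Im; simpl; ring.
  - intros n Hn. destruct n. lia. rewrite pow_n_S. simpl. unfold Re,Im; simpl; ring.
  - simpl. unfold Re, Im; simpl; ring.
  - intros n Hn. destruct n. lia. rewrite pow_n_S. simpl. unfold Re,Im; simpl; ring.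
Qed.

Fixpoint csum (u : nat -> C) (n : nat) : C :=
  match n with O => RtoC 0 | S n => (csum u n + u n)%C end.

Lemma Re_csum u M : Re (csum u (S M)) = sum_f_R0 (fun n => Re (u n)) M.
Proof.
  induction M. simpl. unfold Re; simpl; ring.
  change (Re (csum u (S M) + u (S M))%C = sum_f_R0 (fun n => Re (u n)) M + Re (u (S M))).
  rewrite <- IHM. reflexivity.
Qed.

Lemma Re_tail u M : absC u ->
  Rabs (Re (CSeries u) - Re (csum u M)) <= Series (fun n => Cmod (u (M + n)%nat)).
Proof.
  intros Hu. rewrite Re_CSeries.
  assert (K : forall v, absC v -> Rabs (Series (fun n => Re (v n))) <= Series (fun n => Cmod (v n))).
  { intros v Hv. eapply Rle_trans. apply Series_Rabs.
    apply (exR_le _ _ (fun n => ltac:(rewrite Rabs_Rabsolu; apply Re_le_Cmod)) Hv).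
    apply Series_le; auto. intros n; split. apply Rabs_pos. apply Re_le_Cmod. }
  destruct M.
  - simpl. rewrite Rminus_0_r. apply K; auto.
  - rewrite Re_csum. rewrite (Series_incr_n _ (S M)) by (auto; try lia; apply exRe; auto).
    simpl pred. replace (sum_f_R0 (fun n : nat => Re (u n)) M +
     Series (fun k : nat => Re (u (S M + k)%nat)) - sum_f_R0 (fun n : nat => Re (u n)) M)
     with (Series (fun k : nat => Re (u (S M + k)%nat))) by ring.
    apply (K (fun k => u (S M + k)%nat)).
    apply (proj1 (ex_series_incr_n (fun n => Cmod (u n)) (S M))); auto.
Qed.

Lemma Re_csum_bound u M : absC u -> (forall n, 0 <= Cmod (u n)) ->
  Rabs (Re (csum u M)) <= Series (fun n => Cmod (u n)).
Proof.
  intros Hu _. destruct M.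
  - simpl. rewrite Rabs_R0. apply Series_nonneg; auto. intros; apply Cmod_ge_0.
  - rewrite Re_csum. eapply Rle_trans. apply sum_f_R0_triangle.
    eapply Rle_trans. apply (sum_Rle _ (fun n => Cmod (u n))). intros; apply Re_le_Cmod.
    apply sum_le_Series; auto. intros; apply Cmod_ge_0.
Qed.

Lemma tail_small (a : nat -> R) : (forall n, 0 <= a n) -> ex_series a ->
  forall eps, 0 < eps -> exists M0, forall M, (M0 <= M)%nat -> Series (fun n => a (M + n)%nat) < eps.
Proof.
  intros Hp Ha eps He.
  destruct (proj1 (is_series_Reals _ _) (Series_correct _ Ha) eps He) as [N HN].
  exists (S N). intros M HM.
  assert (HM' := HN (pred M) ltac:(lia)). unfold Rdist in HM'.
  rewrite (Series_incr_n a M) in HM' by (auto; lia).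
  assert (0 <= Series (fun n => a (M + n)%nat)).
  { apply Series_nonneg; auto. apply (proj1 (ex_series_incr_n a M)); auto. }
  rewrite Rabs_minus_sym in HM'.
  replace (sum_f_R0 a (pred M) + Series (fun k : nat => a (M + k)%nat) - sum_f_R0 a (pred M))
    with (Series (fun k : nat => a (M + k)%nat)) in HM' by ring.
  rewrite Rabs_pos_eq in HM'; auto.
Qed.

Ltac cring := apply Cext; simpl; unfold Re, Im; simpl; ring.

Definition E (x : R) : C := (cos x, sin x).

Lemma E_add a b : E (a + b) = (E a * E b)%C.
Proof. apply Cext; simpl; unfold Re, Im; simpl. rewrite cos_plus; ring. rewrite sin_plus; ring. Qed.

Lemma E_0 : E 0 = RtoC 1.
Proof. apply Cext; simpl; unfold Re, Im; simpl. apply cos_0. apply sin_0. Qed.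

Lemma E_pow x n : pow_n (E x) n = E (INR n * x).
Proof.
  induction n. simpl. rewrite Rmult_0_l, E_0. reflexivity.
  rewrite pow_n_S, IHn, S_INR, <- E_add. f_equal. ring.
Qed.

Lemma E_conj x : Cconj (E x) = E (- x).
Proof. apply Cext; simpl; unfold Re, Im; simpl. rewrite cos_neg; auto. rewrite sin_neg; auto. Qed.

Lemma Cmod_E x : Cmod (E x) = 1.
Proof.
  unfold Cmod, E; cbn [fst snd]. replace (cos x ^ 2 + sin x ^ 2) with 1. apply sqrt_1.
  rewrite <- (sin2_cos2 x). unfold Rsqr. ring.
Qed.

Lemma pow_n_scal (r : R) (w : C) n : pow_n (RtoC r * w)%C n = (RtoC (r ^ n) * pow_n w n)%C.
Proof.
  induction n. simpl. cring.
  rewrite !pow_n_S, IHn. simpl pow. generalize (pow_n w n); intros q; destruct w, q. cring.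
Qed.

Lemma pow_n_mult (a b : C) n : pow_n (a * b)%C n = (pow_n a n * pow_n b n)%C.
Proof.
  induction n. simpl. cring.
  rewrite !pow_n_S, IHn. generalize (pow_n a n) (pow_n b n); intros q1 q2; destruct a, b, q1, q2. cring.
Qed.

Lemma pow_n_conj (a : C) n : Cconj (pow_n a n) = pow_n (Cconj a) n.
Proof.
  induction n. simpl. cring.
  rewrite !pow_n_S, Cmult_conj, IHn. reflexivity.
Qed.

Lemma csum_ext_lt u v n : (forall i, (i < n)%nat -> u i = v i) -> csum u n = csum v n.
Proof.
  induction n; intros H; simpl; auto. rewrite IHn, H; auto.
Qed.

Lemma csum_plus u v n : csum (fun i => u i + v i)%C n = (csum u n + csum v n)%C.
Proof. induction n; simpl. cring. rewrite IHn. destruct (csum u n), (csum v n), (u n), (v n). cring. Qed.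

Lemma csum_scal_l (k : C) u n : csum (fun i => k * u i)%C n = (k * csum u n)%C.
Proof. induction n; simpl. cring. rewrite IHn. destruct k, (csum u n), (u n). cring. Qed.

Lemma csum_zero n : csum (fun _ => RtoC 0) n = RtoC 0.
Proof. induction n; simpl; auto. rewrite IHn. cring. Qed.

Lemma csum_one n : csum (fun _ => RtoC 1) n = RtoC (INR n).
Proof. induction n. reflexivity.
  change (csum (fun _ => RtoC 1) (S n)) with (csum (fun _ => RtoC 1) n + RtoC 1)%C. rewrite IHn, S_INR. cring. Qed.

Lemma csum_swap (u : nat -> nat -> C) n m :
  csum (fun i => csum (u i) m) n = csum (fun j => csum (fun i => u i j) n) m.
Proof.
  induction n; simpl. symmetry; apply csum_zero.
  rewrite IHn, <- csum_plus. reflexivity.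
Qed.

Lemma csum_mult u v n m :
  (csum u n * csum v m)%C = csum (fun i => csum (fun j => u i * v j) m)%C n.
Proof.
  induction n; simpl. cring.
  rewrite <- IHn. rewrite csum_scal_l.
  generalize (csum u n) (csum v m) (u n); intros a b c; destruct a, b, c. cring.
Qed.

Lemma csum_conj u n : Cconj (csum u n) = csum (fun i => Cconj (u i)) n.
Proof. induction n; simpl. cring. rewrite Cplus_conj, IHn; auto. Qed.

Lemma csum_delta (X : nat -> C) m M : (m < M)%nat ->
  csum (fun n => if Nat.eqb m n then X n else RtoC 0) M = X m.
Proof.
  induction M; intros H. lia. simpl.
  destruct (Nat.eq_dec m M) as [->|Hne].
  - rewrite Nat.eqb_refl. rewrite (csum_ext_lt _ (fun _ => RtoC 0)). rewrite csum_zero. destruct (X M); cring.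
    intros i Hi. destruct (Nat.eqb_spec M i). lia. auto.
  - rewrite IHM by lia. destruct (Nat.eqb_spec m M). lia. destruct (X m); cring.
Qed.

Fixpoint rsum (u : nat -> R) (n : nat) : R :=
  match n with O => 0 | S n => rsum u n + u n end.

Lemma Re_csum_r u n : Re (csum u n) = rsum (fun i => Re (u i)) n.
Proof. induction n; simpl; auto. rewrite <- IHn; reflexivity. Qed.

Lemma rsum_le u v n : (forall i, (i < n)%nat -> u i <= v i) -> rsum u n <= rsum v n.
Proof. induction n; intros H; simpl. lra. assert (u n <= v n) by auto. assert (rsum u n <= rsum v n) by auto. lra. Qed.

Lemma rsum_plus u v n : rsum (fun i => u i + v i) n = rsum u n + rsum v n.
Proof. induction n; simpl. ring. rewrite IHn; ring. Qed.

Lemma rsum_scal k u n : rsum (fun i => k * u i) n = k * rsum u n.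
Proof. induction n; simpl. ring. rewrite IHn; ring. Qed.

Lemma rsum_const k n : rsum (fun _ => k) n = INR n * k.
Proof. induction n. simpl; ring. change (rsum (fun _ => k) (S n)) with (rsum (fun _ => k) n + k). rewrite IHn, S_INR; ring. Qed.

Lemma rsum_ext u v n : (forall i, (i < n)%nat -> u i = v i) -> rsum u n = rsum v n.
Proof. induction n; intros H; simpl; auto. rewrite IHn, H; auto. Qed.

Lemma geom_csum (w : C) N : ((w - 1) * csum (fun k => pow_n w k) N)%C = (pow_n w N - 1)%C.
Proof.
  induction N; simpl. cring.
  change (pow_n w (S N)) with (w * pow_n w N)%C.
  rewrite Cmult_plus_distr_l, IHN. generalize (pow_n w N); intros q; destruct w, q. cring.
Qed.

Lemma orth_geom x N : E (INR N * x) = RtoC 1 -> E x <> RtoC 1 ->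
  csum (fun k => E (INR k * x)) N = RtoC 0.
Proof.
  intros H1 H2.
  rewrite (csum_ext_lt _ (fun k => pow_n (E x) k)) by (intros; rewrite E_pow; auto).
  assert (Hg := geom_csum (E x) N). rewrite E_pow, H1 in Hg.
  assert (Hne : (E x - 1)%C <> RtoC 0).
  { intros Hc; apply H2. destruct (E x). apply Cext; simpl; injection Hc; intros; unfold Re, Im; simpl in *; lra. }
  replace (csum (fun k => pow_n (E x) k) N) with (/ (E x - 1) * ((E x - 1) * csum (fun k => pow_n (E x) k) N))%C.
  rewrite Hg. destruct (E x - 1)%C; cring.
  field. auto.
Qed.

Lemma E_2PI_nat d : E (2 * PI * INR d) = RtoC 1.
Proof.
  apply Cext; simpl; unfold Re, Im; simpl.
  - rewrite <- (Rplus_0_l (2 * PI * INR d)). replace (0 + 2 * PI * INR d) with (0 + 2 * INR d * PI) by ring.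
    rewrite cos_period. apply cos_0.
  - rewrite <- (Rplus_0_l (2 * PI * INR d)). replace (0 + 2 * PI * INR d) with (0 + 2 * INR d * PI) by ring.
    rewrite sin_period. apply sin_0.
Qed.

Lemma E_ne_1 x : 0 < Rabs x < 2 * PI -> E x <> RtoC 1.
Proof.
  intros Hx Hc. assert (Hcos : cos x = 1) by (change (Re (E x) = Re (RtoC 1)); rewrite Hc; auto).
  replace x with (2 * (x / 2)) in Hcos by field. rewrite cos_2a_sin in Hcos.
  assert (sin (x/2) <> 0).
  { destruct (Rle_lt_dec 0 x).
    - rewrite Rabs_pos_eq in Hx by auto. assert (0 < sin (x/2)) by (apply sin_gt_0; lra). lra.
    - rewrite Rabs_left in Hx by auto. assert (0 < sin (- (x/2))) by (apply sin_gt_0; lra).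
      rewrite sin_neg in H. lra. }
  apply H. nra.
Qed.

Section Orth.
Variable N : nat.
Hypothesis HN : (0 < N)%nat.
Definition theta (k : nat) : R := INR k * (2 * PI / INR N).

Lemma INR_N_pos : 0 < INR N.
Proof. apply lt_0_INR; auto. Qed.

Lemma orth_pos d : (0 < d < N)%nat -> csum (fun k => E (INR d * theta k)) N = RtoC 0.
Proof.
  intros Hd. assert (HNp := INR_N_pos).
  rewrite (csum_ext_lt _ (fun k => E (INR k * (INR d * (2 * PI / INR N))))).
  2: intros; unfold theta; f_equal; ring.
  apply orth_geom.
  - replace (INR N * (INR d * (2 * PI / INR N))) with (2 * PI * INR d) by (field; lra).
    apply E_2PI_nat.
  - apply E_ne_1. assert (0 < INR d) by (apply lt_0_INR; lia).
    assert (INR d < INR N) by (apply lt_INR; lia). assert (Hpi := PI_RGT_0).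
    rewrite Rabs_pos_eq. split. apply Rmult_lt_0_compat; auto. apply Rdiv_lt_0_compat; lra.
    replace (INR d * (2 * PI / INR N)) with ((2 * PI) * (INR d / INR N)) by (field; lra).
    rewrite <- (Rmult_1_r (2 * PI)) at 2. apply Rmult_lt_compat_l. lra.
    apply (Rmult_lt_reg_r (INR N)); auto. unfold Rdiv; rewrite Rmult_assoc, Rinv_l; lra.
    apply Rmult_le_pos. lra. apply Rmult_le_pos. lra. left; apply Rinv_0_lt_compat; lra.
Qed.

Lemma orth_neg d : (0 < d < N)%nat -> csum (fun k => E (- INR d * theta k)) N = RtoC 0.
Proof.
  intros Hd. rewrite (csum_ext_lt _ (fun k => Cconj (E (INR d * theta k)))).
  rewrite <- csum_conj, orth_pos by auto. cring.
  intros; rewrite E_conj; f_equal; ring.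
Qed.
End Orth.

Lemma sumX (a b : nat -> C) (U V : nat -> nat -> C) M N :
  csum (fun k => csum (fun m => a m * U k m)%C M * csum (fun n => b n * V k n)%C M)%C N =
  csum (fun m => csum (fun n => a m * b n * csum (fun k => U k m * V k n)%C N)%C M) M.
Proof.
  rewrite (csum_ext_lt _ (fun k => csum (fun m => csum (fun n => (a m * U k m) * (b n * V k n))%C M) M)).
  2: intros; apply csum_mult.
  rewrite csum_swap. apply csum_ext_lt; intros m _.
  rewrite csum_swap. apply csum_ext_lt; intros n _.
  rewrite <- csum_scal_l. apply csum_ext_lt; intros k _.
  generalize (a m) (U k m) (b n) (V k n); intros w x y t; destruct w, x, y, t; cring.
Qed.

Lemma sumX1 (a : nat -> C) (U : nat -> nat -> C) M N :
  csum (fun k => csum (fun m => a m * U k m)%C M) N =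
  csum (fun m => a m * csum (fun k => U k m) N)%C M.
Proof.
  rewrite csum_swap. apply csum_ext_lt; intros m _. apply csum_scal_l.
Qed.

Section Ident.
Variables (s alpha : R) (M : nat).
Hypothesis HM : (0 < M)%nat.
Let N := (2 * M + 1)%nat.
Lemma HN : (0 < N)%nat. Proof. unfold N; lia. Qed.

Definition uu k := (RtoC s * E (alpha - theta N k))%C.
Definition vv k := (RtoC s * E (theta N k))%C.
Definition zz := (RtoC (s * s) * E alpha)%C.

Lemma prod_uv m n k : (pow_n (uu k) m * pow_n (vv k) n)%C =
  (RtoC (s ^ m * s ^ n) * E (INR m * alpha) * E ((INR n - INR m) * theta N k))%C.
Proof.
  unfold uu, vv. rewrite !pow_n_scal, !E_pow.
  assert (E (INR m * (alpha - theta N k)) * E (INR n * theta N k) =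
          E (INR m * alpha) * E ((INR n - INR m) * theta N k))%C.
  { rewrite <- !E_add. f_equal. ring. }
  generalize dependent (E (INR m * (alpha - theta N k))).
  generalize (E (INR n * theta N k)) (E (INR m * alpha)) (E ((INR n - INR m) * theta N k)).
  intros a b c d Hd. rewrite RtoC_mult.
  transitivity (RtoC (s ^ m) * RtoC (s ^ n) * (d * a))%C.
  destruct a, d; cring. rewrite Hd. destruct b, c; cring.
Qed.

Lemma prod_uvc m n k : (pow_n (uu k) m * Cconj (pow_n (vv k) n))%C =
  (RtoC (s ^ m * s ^ n) * E (INR m * alpha) * E (- INR (m + n) * theta N k))%C.
Proof.
  unfold uu, vv. rewrite pow_n_conj, Cmult_conj, E_conj.
  replace (Cconj (RtoC s)) with (RtoC s) by cring.
  rewrite !pow_n_scal, !E_pow.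
  assert (E (INR m * (alpha - theta N k)) * E (INR n * - theta N k) =
          E (INR m * alpha) * E (- INR (m + n) * theta N k))%C.
  { rewrite <- !E_add. f_equal. rewrite plus_INR. ring. }
  generalize dependent (E (INR m * (alpha - theta N k))).
  generalize (E (INR n * - theta N k)) (E (INR m * alpha)) (E (- INR (m + n) * theta N k)).
  intros a b c d Hd. rewrite RtoC_mult.
  transitivity (RtoC (s ^ m) * RtoC (s ^ n) * (d * a))%C.
  destruct a, d; cring. rewrite Hd. destruct b, c; cring.
Qed.

Lemma orth_uv m n : (m < M)%nat -> (n < M)%nat ->
  csum (fun k => pow_n (uu k) m * pow_n (vv k) n)%C N =
  if Nat.eqb m n then (RtoC (INR N) * pow_n zz m)%C else RtoC 0.
Proof.
  intros Hm Hn.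
  rewrite (csum_ext_lt _ _ _ (fun k _ => prod_uv m n k)).
  rewrite csum_scal_l.
  destruct (Nat.eqb_spec m n) as [<-|Hne].
  - rewrite (csum_ext_lt _ (fun _ => RtoC 1)).
    rewrite csum_one. unfold zz. rewrite pow_n_scal, E_pow, Rpow_mult_distr.
    generalize (E (INR m * alpha)); intros c; destruct c; cring.
    intros k _. rewrite Rminus_diag, Rmult_0_l. apply E_0.
  - destruct (Nat.lt_ge_cases m n).
    + rewrite (csum_ext_lt _ (fun k => E (INR (n - m) * theta N k))).
      rewrite orth_pos. cring. apply HN. unfold N; lia.
      intros k _. rewrite minus_INR by lia. auto.
    + rewrite (csum_ext_lt _ (fun k => E (- INR (m - n) * theta N k))).
      rewrite orth_neg. cring. apply HN. unfold N; lia.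
      intros k _. rewrite minus_INR by lia. f_equal; ring.
Qed.

Lemma orth_uvc m n : (m < M)%nat -> (n < M)%nat ->
  csum (fun k => pow_n (uu k) m * Cconj (pow_n (vv k) n))%C N =
  if Nat.eqb (m + n) 0 then RtoC (INR N) else RtoC 0.
Proof.
  intros Hm Hn.
  rewrite (csum_ext_lt _ _ _ (fun k _ => prod_uvc m n k)).
  rewrite csum_scal_l.
  destruct (Nat.eqb_spec (m + n) 0) as [H0|Hne].
  - assert (m = 0%nat) by lia; assert (n = 0%nat) by lia; subst.
    rewrite (csum_ext_lt _ (fun _ => RtoC 1)).
    rewrite csum_one. simpl. rewrite Rmult_0_l, E_0. cring.
    intros k _. simpl. rewrite Ropp_0, Rmult_0_l. apply E_0.
  - rewrite orth_neg. cring. apply HN. unfold N; lia.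
Qed.

Variables (f p : nat -> C).
Hypothesis Hp0 : p 0%nat = RtoC 1.
Definition FF k := csum (fun m => f m * pow_n (uu k) m)%C M.
Definition PP k := csum (fun n => p n * pow_n (vv k) n)%C M.
Definition HH := csum (fun m => f m * p m * pow_n zz m)%C M.

Lemma S1 : csum (fun k => FF k * PP k)%C N = (RtoC (INR N) * HH)%C.
Proof.
  unfold FF, PP. rewrite sumX. unfold HH. rewrite <- csum_scal_l.
  apply csum_ext_lt; intros m Hm.
  rewrite (csum_ext_lt _ (fun n => if Nat.eqb m n then (f m * p n * (RtoC (INR N) * pow_n zz m))%C else RtoC 0)).
  rewrite csum_delta by auto. generalize (f m) (p m) (pow_n zz m); intros a b c; destruct a, b, c; cring.
  intros n Hn. rewrite orth_uv by auto. destruct (Nat.eqb m n); auto. cring.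
Qed.

Lemma S2 : csum (fun k => FF k * Cconj (PP k))%C N = (RtoC (INR N) * f 0%nat)%C.
Proof.
  unfold FF, PP.
  rewrite (csum_ext_lt (fun k => _ * Cconj _)%C
     (fun k => csum (fun m => f m * pow_n (uu k) m)%C M * csum (fun n => Cconj (p n) * Cconj (pow_n (vv k) n))%C M)%C).
  2: intros k _; rewrite csum_conj; f_equal; apply csum_ext_lt; intros; apply Cmult_conj.
  rewrite sumX.
  rewrite (csum_ext_lt _ (fun m => if Nat.eqb 0 m then (RtoC (INR N) * f 0%nat)%C else RtoC 0)).
  apply csum_delta; auto.
  intros m Hm.
  rewrite (csum_ext_lt _ (fun n => if Nat.eqb 0 n then (if Nat.eqb 0 m then (RtoC (INR N) * f 0%nat)%C else RtoC 0) else RtoC 0)).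
  apply csum_delta; auto.
  intros n Hn. rewrite orth_uvc by auto.
  destruct (Nat.eqb_spec (m + n) 0); destruct (Nat.eqb_spec 0 n); destruct (Nat.eqb_spec 0 m); try lia.
  subst. rewrite Hp0. generalize (f 0%nat); intros c; destruct c; cring.
  all: cring.
Qed.

Lemma S3 : csum (fun k => FF k)%C N = (RtoC (INR N) * f 0%nat)%C.
Proof.
  unfold FF. rewrite sumX1.
  rewrite (csum_ext_lt _ (fun m => if Nat.eqb 0 m then (RtoC (INR N) * f 0%nat)%C else RtoC 0)).
  apply csum_delta; auto.
  intros m Hm.
  rewrite (csum_ext_lt _ (fun k => pow_n (uu k) m * pow_n (vv k) 0)%C).
  rewrite orth_uv by auto.
  destruct (Nat.eqb_spec m 0); destruct (Nat.eqb_spec 0 m); try lia.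
  subst. simpl. generalize (f 0%nat); intros c; destruct c; cring.
  cring.
  intros k _. simpl. generalize (pow_n (uu k) m); intros c; destruct c; cring.
Qed.

Lemma S4 : csum (fun k => PP k)%C N = RtoC (INR N).
Proof.
  unfold PP. rewrite sumX1.
  rewrite (csum_ext_lt _ (fun n => if Nat.eqb 0 n then RtoC (INR N) else RtoC 0)).
  apply csum_delta; auto.
  intros n Hn.
  rewrite (csum_ext_lt _ (fun k => pow_n (uu k) 0 * pow_n (vv k) n)%C).
  rewrite orth_uv by auto.
  destruct (Nat.eqb_spec 0 n). subst. rewrite Hp0. simpl. cring. cring.
  intros k _. simpl. generalize (pow_n (vv k) n); intros c; destruct c; cring.
Qed.

Lemma ident_re :
  rsum (fun k => Re (FF k) * (2 * Re (PP k) - 1)) N = INR N * Re HH.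
Proof.
  assert (H : csum (fun k => FF k * PP k + (FF k * Cconj (PP k) + RtoC (-1) * FF k))%C N
              = (RtoC (INR N) * HH)%C).
  { rewrite !csum_plus, csum_scal_l, S1, S2. rewrite (S3 : csum FF N = _). generalize (f 0%nat); intros c; destruct c; cring. }
  apply (f_equal Re) in H. rewrite Re_csum_r in H. rewrite re_scal_l in H.
  rewrite <- H. apply rsum_ext; intros k _.
  generalize (FF k) (PP k); intros a b; destruct a, b. simpl. unfold Re; simpl. ring.
Qed.

Lemma sum_g : rsum (fun k => 2 * Re (PP k) - 1) N = INR N.
Proof.
  assert (H := f_equal Re S4). rewrite Re_csum_r in H. simpl in H.
  rewrite (rsum_ext _ (fun k => 2 * Re (PP k) + (-1))) by (intros; ring).
  rewrite rsum_plus, rsum_scal, rsum_const. rewrite H. unfold Re; simpl. ring.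
Qed.

End Ident.

Lemma polar (z : C) : Cmod z <> 0 -> exists alpha, -PI <= alpha <= PI /\ z = (RtoC (Cmod z) * E alpha)%C.
Proof.
  intros Hz. set (r := Cmod z).
  assert (Hr : 0 < r) by (assert (0 <= r) by apply Cmod_ge_0; unfold r in *; lra).
  assert (H2 := Cmod2_alt z). fold r in H2.
  set (x := Re z / r). set (y := Im z / r).
  assert (Hxy : x * x + y * y = 1).
  { unfold x, y. field_simplify; [| lra]. rewrite <- H2. field. lra. }
  assert (Hx : -1 <= x <= 1) by (split; nra).
  assert (Hs : sqrt (1 - x²) = Rabs y).
  { replace (1 - x²) with (y²) by (unfold Rsqr; lra). rewrite <- sqrt_Rsqr_abs. auto. }
  assert (Hre : Re z = r * x) by (unfold x; field; lra).
  assert (Him : Im z = r * y) by (unfold y; field; lra).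
  destruct (Rle_lt_dec 0 y).
  - exists (acos x). split. assert (H := acos_bound x). assert (Hpi := PI_RGT_0). lra.
    apply Cext; simpl; unfold Re, Im; simpl.
    + fold (Re z). rewrite Hre, cos_acos by auto. ring.
    + fold (Im z). rewrite Him, sin_acos, Hs, Rabs_pos_eq by auto. ring.
  - exists (- acos x). split. assert (H := acos_bound x). assert (Hpi := PI_RGT_0). lra.
    apply Cext; simpl; unfold Re, Im; simpl.
    + fold (Re z). rewrite cos_neg, Hre, cos_acos by auto. ring.
    + fold (Im z). rewrite sin_neg, Him, sin_acos, Hs, Rabs_left by auto. ring.
Qed.

Lemma pow_diff (u w : C) s n : 0 < s -> Cmod u <= s -> Cmod w <= s ->
  s * Cmod (pow_n u n - pow_n w n) <= INR n * s ^ n * Cmod (u - w).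
Proof.
  intros Hs Hu Hw. induction n.
  - rewrite !pow_n_O. replace (RtoC 1 - RtoC 1)%C with (RtoC 0) by cring. rewrite Cmod_0. simpl. lra.
  - rewrite !pow_n_S.
    replace (u * pow_n u n - w * pow_n w n)%C with (u * (pow_n u n - pow_n w n) + (u - w) * pow_n w n)%C
      by (generalize (pow_n u n) (pow_n w n); intros a b; destruct a, b, u, w; cring).
    eapply Rle_trans. apply Rmult_le_compat_l. lra. apply Cmod_triangle.
    rewrite !Cmod_mult, Cmod_pow_n, S_INR.
    assert (0 <= Cmod (pow_n u n - pow_n w n)) by apply Cmod_ge_0.
    assert (0 <= Cmod (u - w)) by apply Cmod_ge_0.
    assert (Cmod w ^ n <= s ^ n) by (apply pow_incr; split; [apply Cmod_ge_0| auto]).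
    assert (0 <= INR n) by apply pos_INR.
    assert (0 <= s ^ n) by (apply pow_le; lra).
    simpl pow.
    assert (s * (Cmod u * Cmod (pow_n u n - pow_n w n)) <= s * (s * Cmod (pow_n u n - pow_n w n))) by
      (apply Rmult_le_compat_l; [lra| apply Rmult_le_compat_r; auto]).
    assert (s * (Cmod (u - w) * Cmod w ^ n) <= s * (Cmod (u - w) * s ^ n)) by
      (apply Rmult_le_compat_l; [lra| apply Rmult_le_compat_l; auto]).
    assert (s * (s * Cmod (pow_n u n - pow_n w n)) <= s * (INR n * s ^ n * Cmod (u - w))) by
      (apply Rmult_le_compat_l; lra).
    nra.
Qed.

Lemma Cmod_le_sum (c : C) : Cmod c <= Rabs (Re c) + Rabs (Im c).
Proof.
  destruct c as [a b]. unfold Cmod, Re, Im; simpl fst; simpl snd.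
  assert (Ha := Rabs_pos a). assert (Hb := Rabs_pos b).
  rewrite <- (sqrt_Rsqr (Rabs a + Rabs b)) by lra. apply sqrt_le_1_alt.
  assert (E1 : Rabs a * Rabs a = a * a) by (rewrite <- Rabs_mult; apply Rabs_pos_eq; nra).
  assert (E2 : Rabs b * Rabs b = b * b) by (rewrite <- Rabs_mult; apply Rabs_pos_eq; nra).
  unfold Rsqr. simpl. nra.
Qed.

Lemma cont_from_bound (g : R -> R) (x0 K : R) : 0 <= K ->
  (forall x, Rabs (g x - g x0) <= K * (Rabs (cos x - cos x0) + Rabs (sin x - sin x0))) ->
  continuity_pt g x0.
Proof.
  intros HK Hb. unfold continuity_pt, continue_in, limit1_in, limit_in. intros eps Heps.
  set (e := eps / (2 * (K + 1))).
  assert (He : 0 < e) by (unfold e; apply Rdiv_lt_0_compat; lra).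
  destruct (continuity_cos x0 e He) as [d1 [Hd1 H1]].
  destruct (continuity_sin x0 e He) as [d2 [Hd2 H2]].
  exists (Rmin d1 d2). split. apply Rmin_pos; auto.
  intros x [Hx Hd]. simpl in *. unfold R_dist in *.
  assert (A1 : Rabs (cos x - cos x0) < e) by (apply H1; split; auto; eapply Rlt_le_trans; eauto; apply Rmin_l).
  assert (A2 : Rabs (sin x - sin x0) < e) by (apply H2; split; auto; eapply Rlt_le_trans; eauto; apply Rmin_r).
  eapply Rle_lt_trans. apply Hb.
  assert (K * (Rabs (cos x - cos x0) + Rabs (sin x - sin x0)) <= K * (2 * e)).
  { apply Rmult_le_compat_l; lra. }
  assert (K * (2 * e) < eps).
  { unfold e. replace (K * (2 * (eps / (2 * (K + 1))))) with (eps * (K / (K + 1))) by (field; lra).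
    rewrite <- (Rmult_1_r eps) at 2. apply Rmult_lt_compat_l; auto.
    apply (Rmult_lt_reg_r (K + 1)); [lra|]. unfold Rdiv; rewrite Rmult_assoc, Rinv_l; lra. }
  lra.
Qed.

Definition phiF (f : nat -> C) (s th : R) : R :=
  Re (CSeries (fun n => f n * pow_n (RtoC s * E th) n)%C).

Lemma Cmod_sE s th : 0 <= s -> Cmod (RtoC s * E th)%C = s.
Proof. intros; rewrite Cmod_mult, Cmod_R, Cmod_E, Rabs_pos_eq; lra. Qed.

Lemma phiF_cont f s : absU f -> 0 < s < 1 -> forall th0, continuity_pt (phiF f s) th0.
Proof.
  intros Hf Hs th0.
  set (L := Series (fun n => Cmod (RtoC (INR n) * f n)%C * s ^ n)).
  assert (HL : ex_series (fun n => Cmod (RtoC (INR n) * f n)%C * s ^ n)) by (apply absU_n; auto).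
  assert (L0 : 0 <= L).
  { apply Series_nonneg; auto. intros; apply Rmult_le_pos; [apply Cmod_ge_0| apply pow_le; lra]. }
  apply (cont_from_bound _ _ L L0). intros th.
  set (u := (RtoC s * E th)%C). set (w := (RtoC s * E th0)%C).
  assert (Hu : Cmod u = s) by (apply Cmod_sE; lra).
  assert (Hw : Cmod w = s) by (apply Cmod_sE; lra).
  assert (Huw : Cmod (u - w) <= s * (Rabs (cos th - cos th0) + Rabs (sin th - sin th0))).
  { replace (u - w)%C with (RtoC s * (E th - E th0))%C by (unfold u, w; destruct (E th), (E th0); cring).
    rewrite Cmod_mult, Cmod_R, Rabs_pos_eq by lra. apply Rmult_le_compat_l. lra.
    apply Cmod_le_sum. }
  assert (Eu : absC (fun n => f n * pow_n u n)%C) by (apply absU_at; auto; lra).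
  assert (Ew : absC (fun n => f n * pow_n w n)%C) by (apply absU_at; auto; lra).
  unfold phiF. fold u w. rewrite !Re_CSeries.
  rewrite <- Series_minus by (apply exRe; auto).
  set (b := fun n => Cmod (RtoC (INR n) * f n)%C * s ^ n * (Cmod (u - w) / s)).
  assert (Hb : forall n, Rabs (Re (f n * pow_n u n)%C - Re (f n * pow_n w n)%C) <= b n).
  { intros n. unfold b.
    replace (Re (f n * pow_n u n)%C - Re (f n * pow_n w n)%C) with (Re (f n * (pow_n u n - pow_n w n))%C)
      by (generalize (pow_n u n) (pow_n w n); intros a c; destruct a, c, (f n); unfold Re; simpl; ring).
    eapply Rle_trans. apply Re_le_Cmod. rewrite !Cmod_mult, Cmod_R, Rabs_pos_eq by apply pos_INR.
    assert (P := pow_diff u w s n ltac:(lra) ltac:(lra) ltac:(lra)).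
    assert (0 <= Cmod (f n)) by apply Cmod_ge_0.
    replace (INR n * Cmod (f n) * s ^ n * (Cmod (u - w) / s)) with (Cmod (f n) * ((INR n * s ^ n * Cmod (u - w)) / s)) by (field; lra).
    apply Rmult_le_compat_l; auto.
    apply (Rmult_le_reg_l s); [lra|]. replace (s * (INR n * s ^ n * Cmod (u - w) / s)) with (INR n * s ^ n * Cmod (u - w)) by (field; lra). auto. }
  assert (Eb : ex_series b) by (unfold b; apply (exR_ext (fun n => (Cmod (u - w) / s) * (Cmod (RtoC (INR n) * f n)%C * s ^ n))); [intros; ring| apply exR_scal; auto]).
  eapply Rle_trans. apply Series_Rabs.
  apply (exR_le _ b); auto. intros n; rewrite Rabs_Rabsolu; auto.
  eapply Rle_trans. apply Series_le; [| exact Eb]. intros n; split; [apply Rabs_pos| auto].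
  unfold b. rewrite (Series_ext _ (fun n => (Cmod (u - w) / s) * (Cmod (RtoC (INR n) * f n)%C * s ^ n))) by (intros; ring).
  rewrite Series_scal_l. fold L.
  replace (Cmod (u - w) / s * L) with (L * (Cmod (u - w) / s)) by ring.
  apply Rmult_le_compat_l; auto.
  apply (Rmult_le_reg_l s); [lra|]. replace (s * (Cmod (u - w) / s)) with (Cmod (u - w)) by (field; lra).
  lra.
Qed.

Lemma Rabs_bnd x T : Rabs x <= T -> -T <= x <= T.
Proof. unfold Rabs; destruct (Rcase_abs x); intros; lra. Qed.

Lemma theta_range N k : (0 < N)%nat -> (k < N)%nat -> 0 <= theta N k <= 2 * PI.
Proof.
  intros HN Hk. unfold theta. assert (Hpi := PI_RGT_0).
  assert (0 < INR N) by (apply lt_0_INR; auto).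
  assert (INR k <= INR N) by (apply le_INR; lia).
  assert (0 <= INR k) by apply pos_INR.
  split. apply Rmult_le_pos; auto. apply Rmult_le_pos. lra. left; apply Rinv_0_lt_compat; lra.
  replace (2 * PI) with (INR N * (2 * PI / INR N)) at 2 by (field; lra).
  apply Rmult_le_compat_r; auto. apply Rmult_le_pos. lra. left; apply Rinv_0_lt_compat; lra.
Qed.

Lemma keyK (f p : nat -> C) (lam : R) : absU f -> absU p -> p 0%nat = RtoC 1 ->
  (forall w, Cmod w < 1 -> lam < Re (CSeries (fun n => f n * pow_n w n)%C)) ->
  (forall w, 0 < Cmod w < 1 -> 1/2 < Re (CSeries (fun n => p n * pow_n w n)%C)) ->
  forall z, Cmod z < 1 -> lam < Re (CSeries (fun n => f n * p n * pow_n z n)%C).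
Proof.
  intros Hf Hp Hp0 HF HP z Hz.
  destruct (Req_dec (Cmod z) 0) as [Hz0|Hz0].
  - apply Cmod_eq_0 in Hz0. subst z.
    assert (A := CSeries_at0 (fun n => (f n * p n)%C)). cbv beta in A. rewrite A.
    assert (B := CSeries_at0 f). assert (C0 := HF (RtoC 0) ltac:(rewrite Cmod_0; lra)). rewrite B in C0.
    rewrite Hp0. replace (f 0%nat * RtoC 1)%C with (f 0%nat) by (destruct (f 0%nat); cring). auto.
  - set (rho := Cmod z).
    assert (Hrho : 0 < rho < 1) by (split; [assert (0 <= rho) by apply Cmod_ge_0; unfold rho in *; lra| auto]).
    set (s := sqrt rho).
    assert (Hs : 0 < s < 1) by (split; [apply sqrt_lt_R0; lra| rewrite <- sqrt_1; apply sqrt_lt_1; lra]).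
    assert (Hss : s * s = rho) by (apply sqrt_sqrt; lra).
    destruct (polar z Hz0) as [alpha [Ha Hza]].
    assert (Hzz : z = zz s alpha) by (unfold zz; rewrite Hss; auto).
    assert (Hpi := PI_RGT_0).
    destruct (continuity_ab_min (phiF f s) (-3 * PI) PI ltac:(lra) (fun c _ => phiF_cont f s Hf Hs c)) as [mx [Hmin Hmx]].
    set (c0 := phiF f s mx).
    assert (Hc0 : lam < c0) by (unfold c0, phiF; apply HF; rewrite Cmod_sE; lra).
    set (D := c0 - lam).
    assert (HD : 0 < D) by (unfold D; lra).
    set (AF := fun n => Cmod (f n) * s ^ n).
    set (AP := fun n => Cmod (p n) * s ^ n).
    set (AH := fun n => Cmod (f n * p n * pow_n z n)%C).
    assert (EAF : ex_series AF) by (apply Hf; auto).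
    assert (EAP : ex_series AP) by (apply Hp; auto).
    assert (EAH : ex_series AH) by (apply (absU_at (fun n => f n * p n)%C); [apply absU_mult; auto| auto]).
    assert (PAF : forall n, 0 <= AF n) by (intros; unfold AF; apply Rmult_le_pos; [apply Cmod_ge_0| apply pow_le; lra]).
    assert (PAP : forall n, 0 <= AP n) by (intros; unfold AP; apply Rmult_le_pos; [apply Cmod_ge_0| apply pow_le; lra]).
    assert (PAH : forall n, 0 <= AH n) by (intros; unfold AH; apply Cmod_ge_0).
    set (BF := Series AF + Rabs lam).
    assert (HBF : 0 <= BF).
    { unfold BF. assert (0 <= Series AF) by (apply Series_nonneg; auto). assert (Hl := Rabs_pos lam); lra. }
    destruct (tail_small AF PAF EAF (D/4) ltac:(lra)) as [M1 HM1].
    assert (Hd2 : 0 < D / (8 * (BF + 1))) by (apply Rdiv_lt_0_compat; lra).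
    destruct (tail_small AP PAP EAP (D / (8 * (BF + 1))) Hd2) as [M2 HM2].
    destruct (tail_small AH PAH EAH (D/4) ltac:(lra)) as [M3 HM3].
    set (M := S (M1 + M2 + M3)).
    assert (HM : (0 < M)%nat) by (unfold M; lia).
    specialize (HM1 M ltac:(unfold M; lia)).
    specialize (HM2 M ltac:(unfold M; lia)).
    specialize (HM3 M ltac:(unfold M; lia)).
    set (N := (2 * M + 1)%nat).
    assert (HN : (0 < N)%nat) by (unfold N; lia).
    set (TP := Series (fun n => AP (M + n)%nat)) in HM2.
    assert (TP0 : 0 <= TP).
    { apply Series_nonneg; auto. apply (proj1 (ex_series_incr_n AP M)); auto. }
    assert (Hak : forall k, (k < N)%nat -> D - D/4 <= Re (FF s alpha M f k) - lam <= BF).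
    { intros k Hk.
      assert (Hu : Cmod (uu s alpha M k) = s) by (unfold uu; apply Cmod_sE; lra).
      assert (Ab : absC (fun n => f n * pow_n (uu s alpha M k) n)%C) by (apply absU_at; auto; lra).
      assert (Et := Re_tail _ M Ab).
      rewrite (Series_ext _ (fun n => AF (M + n)%nat)) in Et.
      2: { intros n; unfold AF; rewrite Cmod_mult, Cmod_pow_n, Hu; auto. }
      assert (Hphi : c0 <= Re (CSeries (fun n => f n * pow_n (uu s alpha M k) n)%C)).
      { unfold c0. apply (Hmin (alpha - theta N k)). assert (Ht := theta_range N k HN Hk). lra. }
      assert (Bd := Re_csum_bound _ M Ab (fun n => Cmod_ge_0 _)).
      rewrite (Series_ext _ AF) in Bd.
      2: { intros n; unfold AF; rewrite Cmod_mult, Cmod_pow_n, Hu; auto. }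
      change (csum (fun n => f n * pow_n (uu s alpha M k) n)%C M) with (FF s alpha M f k) in Et, Bd.
      apply Rabs_bnd in Et. apply Rabs_bnd in Bd.
      assert (Hl := Rle_abs (- lam)). rewrite Rabs_Ropp in Hl.
      unfold BF, D in *. split; lra. }
    assert (Hgk : forall k, (k < N)%nat -> - (2 * TP) <= 2 * Re (PP s M p k) - 1).
    { intros k Hk.
      assert (Hv : Cmod (vv s M k) = s) by (unfold vv; apply Cmod_sE; lra).
      assert (Ab : absC (fun n => p n * pow_n (vv s M k) n)%C) by (apply absU_at; auto; lra).
      assert (Et := Re_tail _ M Ab).
      rewrite (Series_ext _ (fun n => AP (M + n)%nat)) in Et.
      2: { intros n; unfold AP; rewrite Cmod_mult, Cmod_pow_n, Hv; auto. }
      assert (Hh := HP (vv s M k) ltac:(rewrite Hv; lra)).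
      change (csum (fun n => p n * pow_n (vv s M k) n)%C M) with (PP s M p k) in Et.
      apply Rabs_bnd in Et. fold TP in Et. lra. }
    assert (Hid := ident_re s alpha M HM f p Hp0).
    assert (Hsg := sum_g s alpha M HM p Hp0).
    fold N in Hid, Hsg.
    assert (Hlow : rsum (fun k => lam * (2 * Re (PP s M p k) - 1) +
                      ((D - D/4) * (2 * Re (PP s M p k) - 1) + (- (BF * (2 * TP))))) N
                   <= rsum (fun k => Re (FF s alpha M f k) * (2 * Re (PP s M p k) - 1)) N).
    { apply rsum_le. intros k Hk.
      specialize (Hak k Hk). specialize (Hgk k Hk).
      set (a := Re (FF s alpha M f k) - lam) in *.
      set (g := 2 * Re (PP s M p k) - 1) in *.
      replace (Re (FF s alpha M f k)) with (lam + a) by (unfold a; ring).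
      assert (0 <= (a - (D - D/4)) * (g + 2 * TP)) by (apply Rmult_le_pos; lra).
      assert ((a - (D - D/4)) * TP <= BF * TP) by (apply Rmult_le_compat_r; lra).
      nra. }
    rewrite !rsum_plus, !rsum_scal, rsum_const, Hsg, Hid in Hlow.
    assert (HNp : 0 < INR N) by (apply lt_0_INR; auto).
    assert (H8 : TP * (8 * (BF + 1)) < D).
    { apply (Rmult_lt_compat_r (8 * (BF + 1))) in HM2; [| lra].
      unfold Rdiv in HM2; rewrite Rmult_assoc, Rinv_l in HM2 by lra. lra. }
    assert (HBT : BF * (2 * TP) <= D / 4).
    { assert (BF * TP <= (BF + 1) * TP) by (apply Rmult_le_compat_r; lra). lra. }
    assert (HHH : lam + D / 2 <= Re (HH s alpha M f p)).
    { apply (Rmult_le_reg_l (INR N)); auto.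
      assert (INR N * (BF * (2 * TP)) <= INR N * (D/4)) by (apply Rmult_le_compat_l; lra).
      lra. }
    assert (Ab : absC (fun n => f n * p n * pow_n z n)%C) by exact EAH.
    assert (Et := Re_tail _ M Ab).
    change (Series (fun n => Cmod (f (M + n)%nat * p (M + n)%nat * pow_n z (M + n))%C))
      with (Series (fun n => AH (M + n)%nat)) in Et.
    assert (HHe : HH s alpha M f p = csum (fun m => f m * p m * pow_n z m)%C M) by (unfold HH; rewrite Hzz; reflexivity).
    rewrite <- HHe in Et. apply Rabs_bnd in Et. unfold AH in HM3. lra.
Qed.

Lemma absC_ext u v : (forall n, u n = v n) -> absC u -> absC v.
Proof. intros H Hu. apply (exR_ext (fun n => Cmod (u n))); auto. intros n; rewrite H; auto. Qed.

Lemma absC_ff c z k j : absU c -> Cmod z < 1 ->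
  absC (fun n => RtoC (INR (ff (n + j) k)) * c (n + j)%nat * pow_n z n)%C.
Proof.
  intros Hc Hz. apply (absU_at (fun n => RtoC (INR (ff (n + j) k)) * c (n + j)%nat)%C); auto.
  apply (absU_shift (fun m => RtoC (INR (ff m k)) * c m)%C). apply absU_ff; auto.
Qed.

Lemma absC_scal u (k : C) : absC u -> absC (fun n => k * u n)%C.
Proof.
  intros H. apply (exR_ext (fun n => Cmod k * Cmod (u n))). intros; rewrite Cmod_mult; auto.
  apply exR_scal, H.
Qed.

Lemma absC_plus u v : absC u -> absC v -> absC (fun n => u n + v n)%C.
Proof.
  intros Hu Hv. apply (exR_le _ (fun n => Cmod (u n) + Cmod (v n))).
  intros n. rewrite Rabs_pos_eq by apply Cmod_ge_0. apply Cmod_triangle.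
  apply exR_plus; auto.
Qed.

Definition Kc (g d : R) (m : nat) : R :=
  g * INR (ff m 1) + d * INR (ff m 2) + ((d - g) / 2) * INR (ff m 3).

Lemma ff_small m k : (m < k)%nat -> ff m k = 0%nat.
Proof.
  revert m; induction k; intros m Hm. lia.
  simpl. destruct (Nat.eq_dec m k). subst. rewrite Nat.sub_diag. lia.
  rewrite IHk by lia. lia.
Qed.

Lemma T_shift c z k j : (j < k)%nat ->
  CSeries (fun n => RtoC (INR (ff (n + 1) k)) * c (n + 1)%nat * pow_n z n)%C =
  CSeries (fun n => RtoC (INR (ff (n + 1 + j) k)) * c (n + 1 + j)%nat * pow_n z (n + j))%C.
Proof.
  intros Hjk.
  rewrite (CSeries_shift _ j).
  - apply CSeries_ext; intros n. cbv beta.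
    replace (j + n + 1)%nat with (n + 1 + j)%nat by lia. replace (j + n)%nat with (n + j)%nat by lia. reflexivity.
  - intros i Hi. rewrite ff_small by lia. simpl. destruct (c (i + 1)%nat), (pow_n z i); cring.
Qed.

Lemma PSder_eq k c z : CSeries (fun n => RtoC (INR (ff (n + k) k)) * c (n + k)%nat * pow_n z n)%C = PSder k c z.
Proof.
  unfold PSder. rewrite (CSeries_shift (fun m => (RtoC (INR (ff m k)) * c m * pow_n z (m - k))%C) k).
  - apply CSeries_ext; intros n. cbv beta.
    replace (k + n - k)%nat with n by lia. replace (k + n)%nat with (n + k)%nat by lia. reflexivity.
  - intros i Hi. rewrite ff_small by lia. simpl. destruct (c i), (pow_n z (i - k)); cring.
Qed.

Lemma zpow_CSeries (c : nat -> C) z j : absC (fun n => c n * pow_n z n)%C ->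
  (pow_n z j * CSeries (fun n => c n * pow_n z n))%C = CSeries (fun n => c n * pow_n z (n + j))%C.
Proof.
  intros H. rewrite <- CSeries_scal by auto. apply CSeries_ext; intros n.
  rewrite Nat.add_comm, pow_n_plus. change (@mult C_Ring) with Cmult.
  generalize (pow_n z j) (pow_n z n) (c n); intros a b d; destruct a, b, d; cring.
Qed.

Lemma Lop_eq g d c z : absU c -> Cmod z < 1 ->
  Lop g d c z = CSeries (fun n => RtoC (Kc g d (S n)) * c (S n) * pow_n z n)%C.
Proof.
  intros Hc Hz.
  set (T := fun k n => (RtoC (INR (ff (n + 1) k)) * c (n + 1)%nat * pow_n z n)%C).
  assert (AT : forall k, absC (T k)) by (intros; apply absC_ff; auto).
  assert (E1 : PSder 1 c z = CSeries (T 1%nat)) by (rewrite <- PSder_eq; reflexivity).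
  assert (Hz1 : pow_n z 1 = z) by (change (z * RtoC 1 = z)%C; destruct z; cring).
  assert (Hz2 : pow_n z 2 = (z * z)%C) by (change (z * (z * RtoC 1) = z * z)%C; destruct z; cring).
  assert (E2 : (z * PSder 2 c z)%C = CSeries (T 2%nat)).
  { rewrite <- PSder_eq. unfold T. rewrite (T_shift c z 2 1) by lia.
    rewrite <- Hz1 at 1. rewrite zpow_CSeries by (apply absC_ff; auto).
    apply CSeries_ext; intros n. replace (n + 1 + 1)%nat with (n + 2)%nat by lia. reflexivity. }
  assert (E3 : (z * z * PSder 3 c z)%C = CSeries (T 3%nat)).
  { rewrite <- PSder_eq. unfold T. rewrite (T_shift c z 3 2) by lia.
    rewrite <- Hz2. rewrite zpow_CSeries by (apply absC_ff; auto).
    apply CSeries_ext; intros n. replace (n + 1 + 2)%nat with (n + 3)%nat by lia. reflexivity. }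
  unfold Lop.
  replace (RtoC g * PSder 1 c z + RtoC d * z * PSder 2 c z + RtoC ((d - g) / 2) * (z * z) * PSder 3 c z)%C
    with (RtoC g * PSder 1 c z + RtoC d * (z * PSder 2 c z) + RtoC ((d - g) / 2) * (z * z * PSder 3 c z))%C
    by (generalize (PSder 1 c z) (PSder 2 c z) (PSder 3 c z); intros a b e; destruct a, b, e, z; cring).
  rewrite E1, E2, E3. rewrite <- !CSeries_scal by auto.
  assert (S1 : absC (fun n => RtoC g * T 1%nat n)%C) by (apply absC_scal, AT).
  assert (S2 : absC (fun n => RtoC d * T 2%nat n)%C) by (apply absC_scal, AT).
  assert (S3 : absC (fun n => RtoC ((d - g) / 2) * T 3%nat n)%C) by (apply absC_scal, AT).
  rewrite <- (CSeries_plus _ _ S1 S2).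
  rewrite <- (CSeries_plus _ _ (absC_plus _ _ S1 S2) S3).
  apply CSeries_ext; intros n. unfold T, Kc. replace (n + 1)%nat with (S n) by lia.
  generalize (c (S n)) (pow_n z n); intros a b; destruct a, b. cring.
Qed.

Lemma phi_series phi w : absU phi -> phi 0%nat = RtoC 0 -> 0 < Cmod w < 1 ->
  phi_over_z phi w = CSeries (fun n => phi (S n) * pow_n w n)%C.
Proof.
  intros Hp H0 Hw. unfold phi_over_z. destruct (Req_EM_T (Cmod w) 0) as [e|ne]. lra.
  assert (Hw0 : w <> RtoC 0) by (intros ->; rewrite Cmod_0 in Hw; lra).
  unfold PSval. rewrite <- (PSder_eq 0 phi w).
  rewrite (CSeries_ext _ (fun n => phi n * pow_n w n)%C).
  2: { intros n. replace (n + 0)%nat with n by lia. change (INR (ff n 0)) with 1.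
       generalize (phi n) (pow_n w n); intros a b; destruct a, b; cring. }
  rewrite (CSeries_shift (fun n => phi n * pow_n w n)%C 1).
  2: { intros i Hi. replace i with 0%nat by lia. rewrite H0. change (pow_n w 0) with (RtoC 1). cring. }
  rewrite (CSeries_ext _ (fun n => w * (phi (S n) * pow_n w n))%C).
  2: { intros n. replace (1 + n)%nat with (S n) by lia. change (pow_n w (S n)) with (w * pow_n w n)%C.
       generalize (phi (S n)) (pow_n w n); intros a b; destruct a, b, w; cring. }
  rewrite CSeries_scal.
  2: { apply (absU_at (fun n => phi (S n))). apply absU_S; auto. lra. }
  generalize (CSeries (fun n => phi (S n) * pow_n w n)%C). intros X. field. auto.
Qed.

Lemma eps_exists (L : C) : exists e : C, Cmod e <= 1 /\ Re (e * L)%C = - Cmod L.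
Proof.
  destruct (Req_dec (Cmod L) 0) as [H|H].
  - exists (RtoC 0). rewrite Cmod_0, H. split. lra. destruct L; unfold Re; simpl; ring.
  - set (r := Cmod L). assert (Hr : 0 < r) by (assert (0 <= r) by apply Cmod_ge_0; unfold r in *; lra).
    assert (H2 := Cmod2_alt L). fold r in H2.
    destruct L as [x y]. unfold Re, Im in H2; cbn [fst snd] in H2.
    exists (- x / r, y / r). split.
    + unfold Cmod; cbn [fst snd]. rewrite <- sqrt_1. apply sqrt_le_1_alt.
      replace ((- x / r) ^ 2 + (y / r) ^ 2) with ((x ^ 2 + y ^ 2) / (r ^ 2)) by (field; lra).
      rewrite <- H2. right. field. lra.
    + unfold Re; cbn [fst snd Cmult]. replace (- x / r * x - y / r * y) with (- (x ^ 2 + y ^ 2) / r) by (field; lra).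
      rewrite <- H2. field. lra.
Qed.

Lemma absU_Kc g d c : absU c -> absU (fun n => RtoC (Kc g d (S n)) * c (S n))%C.
Proof.
  intros Hc. apply (absU_S (fun m => RtoC (Kc g d m) * c m)%C).
  apply (absU_ext (fun m => RtoC g * (RtoC (INR (ff m 1)) * c m) + RtoC d * (RtoC (INR (ff m 2)) * c m)
                             + RtoC ((d - g) / 2) * (RtoC (INR (ff m 3)) * c m))%C).
  intros m; unfold Kc. generalize (c m); intros a; destruct a; cring.
  repeat apply absU_plus; apply absU_scal; apply absU_ff; auto.
Qed.

Lemma Re_minus_R (x : C) r : Re (x - RtoC r)%C = Re x - r.
Proof. destruct x; unfold Re; simpl; ring. Qed.

Theorem theorem17 (gamma delta lambda : R) (a b phi : nat -> C) :
  0 <= lambda -> lambda < gamma -> gamma <= delta ->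
  RH0 gamma delta lambda a b ->
  in_A phi ->
  (forall z : C, Cmod z < 1 -> Re (phi_over_z phi z) > 1 / 2) ->
  RH0 gamma delta lambda (fst (harm_conv a b phi)) (snd (harm_conv a b phi)).
Proof.
  intros Hl Hlg Hgd HR HA Hpz.
  destruct HR as [[Ha [Hb [Ha0 [Ha1 [Hb0 Hb1]]]]] HR].
  destruct HA as [Hph [Hph0 Hph1]].
  apply analytic_absU in Ha. apply analytic_absU in Hb. apply analytic_absU in Hph.
  assert (HAa : absU (hadamard a phi)) by (apply absU_mult; auto).
  assert (HBb : absU (hadamard b phi)) by (apply absU_mult; auto).
  cbn [fst snd harm_conv].
  split.
  - unfold in_H0. split; [apply absU_analytic; auto|].
    split; [apply absU_analytic; auto|].
    unfold hadamard. rewrite Ha0, Ha1, Hb0, Hb1, Hph0, Hph1.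
    repeat split; cring.
  - intros z Hz.
    rewrite (Lop_eq _ _ _ z HAa Hz), (Lop_eq _ _ _ z HBb Hz).
    set (LA := CSeries (fun n => RtoC (Kc gamma delta (S n)) * hadamard a phi (S n) * pow_n z n)%C).
    set (LB := CSeries (fun n => RtoC (Kc gamma delta (S n)) * hadamard b phi (S n) * pow_n z n)%C).
    destruct (eps_exists LB) as [e [He1 He2]].
    set (f := fun n => (RtoC (Kc gamma delta (S n)) * (a (S n) + e * b (S n)))%C).
    set (p := fun n => phi (S n)).
    assert (Hf : absU f).
    { apply (absU_ext (fun n => RtoC (Kc gamma delta (S n)) * a (S n) + e * (RtoC (Kc gamma delta (S n)) * b (S n)))%C).
      intros n; unfold f. generalize (a (S n)) (b (S n)); intros x y; destruct x, y, e; cring.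
      apply absU_plus. apply absU_Kc; auto. apply absU_scal, absU_Kc; auto. }
    assert (Hp : absU p) by (apply absU_S; auto).
    assert (Hp0 : p 0%nat = RtoC 1) by (unfold p; auto).
    assert (Sp : forall c w, absU c -> Cmod w < 1 ->
       CSeries (fun n => (RtoC (Kc gamma delta (S n)) * c (S n) * pow_n w n + e * (RtoC (Kc gamma delta (S n)) * b (S n) * pow_n w n)))%C =
       (CSeries (fun n => RtoC (Kc gamma delta (S n)) * c (S n) * pow_n w n)%C + e * CSeries (fun n => RtoC (Kc gamma delta (S n)) * b (S n) * pow_n w n)%C)%C).
    { intros c w Hc Hw. rewrite <- CSeries_scal.
      apply CSeries_plus. apply (absU_at (fun n => RtoC (Kc gamma delta (S n)) * c (S n))%C); auto. apply absU_Kc; auto.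
      apply absC_scal. apply (absU_at (fun n => RtoC (Kc gamma delta (S n)) * b (S n))%C); auto. apply absU_Kc; auto.
      apply (absU_at (fun n => RtoC (Kc gamma delta (S n)) * b (S n))%C); auto. apply absU_Kc; auto. }
    assert (HF : forall w, Cmod w < 1 -> lambda < Re (CSeries (fun n => f n * pow_n w n)%C)).
    { intros w Hw.
      rewrite (CSeries_ext _ (fun n => (RtoC (Kc gamma delta (S n)) * a (S n) * pow_n w n + e * (RtoC (Kc gamma delta (S n)) * b (S n) * pow_n w n)))%C).
      2: { intros n; unfold f. generalize (a (S n)) (b (S n)) (pow_n w n); intros x y t; destruct x, y, t, e; cring. }
      rewrite Sp by auto. rewrite <- (Lop_eq _ _ a w Ha Hw), <- (Lop_eq _ _ b w Hb Hw).
      specialize (HR w Hw). rewrite Re_minus_R in HR.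
      assert (Q := Re_le_Cmod (e * Lop gamma delta b w)%C). rewrite Cmod_mult in Q.
      assert (Q2 : Cmod e * Cmod (Lop gamma delta b w) <= Cmod (Lop gamma delta b w)).
      { rewrite <- (Rmult_1_l (Cmod (Lop gamma delta b w))) at 2. apply Rmult_le_compat_r; auto. apply Cmod_ge_0. }
      apply Rabs_bnd in Q.
      replace (Re (Lop gamma delta a w + e * Lop gamma delta b w)%C) with (Re (Lop gamma delta a w) + Re (e * Lop gamma delta b w)%C)
        by (destruct (Lop gamma delta a w), (e * Lop gamma delta b w)%C; unfold Re; simpl; ring).
      lra. }
    assert (HP : forall w, 0 < Cmod w < 1 -> 1 / 2 < Re (CSeries (fun n => p n * pow_n w n)%C)).
    { intros w Hw. unfold p. rewrite <- phi_series by auto. apply Hpz. lra. }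
    assert (K := keyK f p lambda Hf Hp Hp0 HF HP z Hz).
    rewrite (CSeries_ext _ (fun n => (RtoC (Kc gamma delta (S n)) * hadamard a phi (S n) * pow_n z n + e * (RtoC (Kc gamma delta (S n)) * hadamard b phi (S n) * pow_n z n)))%C) in K.
    2: { intros n; unfold f, p, hadamard. generalize (a (S n)) (b (S n)) (phi (S n)) (pow_n z n); intros x y q t; destruct x, y, q, t, e; cring. }
    assert (X1 : absC (fun n => RtoC (Kc gamma delta (S n)) * hadamard a phi (S n) * pow_n z n)%C).
    { apply (absU_at (fun n => RtoC (Kc gamma delta (S n)) * hadamard a phi (S n))%C); auto. apply absU_Kc; auto. }
    assert (X2 : absC (fun n => RtoC (Kc gamma delta (S n)) * hadamard b phi (S n) * pow_n z n)%C).
    { apply (absU_at (fun n => RtoC (Kc gamma delta (S n)) * hadamard b phi (S n))%C); auto. apply absU_Kc; auto. }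
    rewrite (CSeries_plus _ _ X1 (absC_scal _ e X2)) in K.
    rewrite (CSeries_scal e _ X2) in K.
    fold LA LB in K.
    replace (Re (LA + e * LB)%C) with (Re LA + Re (e * LB)%C) in K by (destruct LA, (e * LB)%C; unfold Re; simpl; ring).
    rewrite He2 in K. rewrite Re_minus_R. lra.
Qed.
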